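(* For $j\in\{1,\dots,k\}$ let $F_j\colon\mathbb B^{\alpha^j}\to\mathbb C$ ($j\le k+1$) be functors and $\phi_j\colon F_j\to F_{j+1}$ transformations of type $|\alpha^j|\xrightarrow{\sigma_j}n_j\xleftarrow{\tau_j}|\alpha^{j+1}|$. Suppose the type $|\alpha^1|\to l\leftarrow|\alpha^{k+1}|$ of $\phi_k\circ\cdots\circ\phi_1$ is computed by iterated pushouts in finite sets, and let $\xi_j\colon n_j\to l$ be the induced map from $n_j$ to $l$. Let $i\in l$. If the $i$-th connected component of the composite graph $\Gamma(\phi_k)\circ\cdots\circ\Gamma(\phi_1)$ is acyclic and, for all $j\in\{1,\dots,k\}$ and all $x\in\xi_j^{-1}\{i\}$, the transformation $\phi_j$ is dinatural in its $x$-th variable, then $\phi_k\circ\cdots\circ\phi_1$ is dinatural in its $i$-th variable.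
   Context: Notation: for $k\in\mathbb N$, $k$ also denotes $\{1,\dots,k\}$. For $\alpha\in\{+,-\}^*$, $\mathbb B^\alpha=\mathbb B^{\alpha_1}\times\cdots\times\mathbb B^{\alpha_{|\alpha|}}$ with $\mathbb B^+=\mathbb B$, $\mathbb B^-=\mathbb B^{op}$. For $\mathbf A=(A_1,\dots,A_n)$ and $\sigma\colon k\to n$, $\mathbf A\sigma=(A_{\sigma1},\dots,A_{\sigma k})$. A morphism $f\colon A\to B$ placed in a contravariant argument is regarded as a morphism $B\to A$ of $\mathbb B^{op}$. A transformation $\phi\colon F\to G$ of type $|\alpha|\xrightarrow{\sigma}n\xleftarrow{\tau}|\beta|$ ($\sigma,\tau$ arbitrary functions) is a family $\phi_{\mathbf A}\colon F(\mathbf A\sigma)\to G(\mathbf A\tau)$, $\mathbf A\in\mathrm{Ob}(\mathbb B)^n$; $A_i$ is its $i$-th variable. $\mathbf A[X,Y/i]\sigma$ is the tuple whose $j$-th entry is $X$ if $\sigma j=i,\alpha_j=-$, $Y$ if $\sigma j=i,\alpha_j=+$, and $A_{\sigma j}$ (or $1_{A_{\sigma j}}$ when $X,Y$ are morphisms) otherwise; $\mathbf A[X/i]=\mathbf A[X,X/i]$. $\phi$ is dinatural in its $i$-th variable if for all objects $A_j$ ($j\neq i$) and all $f\colon A\to B$: $G(\mathbf A[A,f/i]\tau)\circ\phi_{\mathbf A[A/i]}\circ F(\mathbf A[f,A/i]\sigma)=G(\mathbf A[f,B/i]\tau)\circ\phi_{\mathbf A[B/i]}\circ F(\mathbf A[B,f/i]\sigma)$.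 Vertical composition of $\phi$ with $\psi\colon G\to H$ of type $|\beta|\xrightarrow{\eta}m\xleftarrow{\theta}|\gamma|$: with $\zeta\colon n\to l$, $\xi\colon m\to l$ a pushout of $\tau,\eta$, $\psi\circ\phi$ has type $(\zeta\sigma,\xi\theta)$ and components $\psi_{\mathbf A\xi}\circ\phi_{\mathbf A\zeta}$. Iterating gives $\phi_k\circ\cdots\circ\phi_1$, whose type is given by pasting pushouts; $\xi_j$ is the composite of the pushout maps from $n_j$ to the final set $l$. Composite graph $\Gamma(\phi_k)\circ\cdots\circ\Gamma(\phi_1)$: directed bipartite graph whose places are the disjoint union of $|\alpha^1|,\dots,|\alpha^{k+1}|$ and whose transitions are $n_1\sqcup\cdots\sqcup n_k$; for $t\in n_j$: arc from place $p$ of block $\alpha^j$ to $t$ iff $\sigma_j p=t$ and $\alpha^j_p=+$, from $t$ to it iff $\sigma_j p=t$ and $\alpha^j_p=-$; arc from place $p$ of block $\alpha^{j+1}$ to $t$ iff $\tau_j p=t$ and $\alpha^{j+1}_p=-$, from $t$ to it iff $\tau_jp=t$ and $\alpha^{j+1}_p=+$. Its connected components correspond bijectively to $l$; the $i$-th one contains the transitions $t\in n_j$ with $\xi_j t=i$. Acyclic means without directed cycles. *)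

(* Defs.v *)
From HB Require Import structures.
From Stdlib Require Import Relations.
From mathcomp Require Import all_boot.

Set Implicit Arguments.
Unset Strict Implicit.
Unset Printing Implicit Defensive.

Record category := Category {
  cOb : Type;
  cMor : Type;
  cdom : cMor -> cOb;
  ccod : cMor -> cOb;
  cid : cOb -> cMor;
  ccomp : cMor -> cMor -> cMor;
  cdom_id : forall X, cdom (cid X) = X;
  ccod_id : forall X, ccod (cid X) = X;
  cdom_comp : forall g f, ccod f = cdom g -> cdom (ccomp g f) = cdom f;
  ccod_comp : forall g f, ccod f = cdom g -> ccod (ccomp g f) = ccod g;
  ccomp_idl : forall f, ccomp (cid (ccod f)) f = f;
  ccomp_idr : forall f, ccomp f (cid (cdom f)) = f;
  ccompA : forall h g f, ccod f = cdom g -> ccod g = cdom h ->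
             ccomp h (ccomp g f) = ccomp (ccomp h g) f
}.

(* A functor F : B^alpha -> C, alpha : 'I_m -> bool (true = '+',       *)
(* false = '-').  An object of B^alpha is a tuple A : 'I_m -> Ob B; a  *)
(* morphism is a tuple f : 'I_m -> Mor B, where a contravariant entry  *)
(* f p : X -> Y of B is a morphism Y -> X of B^op.                      *)
Record mfunctor (B C : category) (m : nat) (alpha : 'I_m -> bool) := MFunctor {
  fob : ('I_m -> cOb B) -> cOb C;
  fmor : ('I_m -> cMor B) -> cMor C;
  fmor_dom : forall f : 'I_m -> cMor B,
    cdom (fmor f) = fob (fun p => if alpha p then cdom (f p) else ccod (f p));
  fmor_cod : forall f : 'I_m -> cMor B,
    ccod (fmor f) = fob (fun p => if alpha p then ccod (f p) else cdom (f p));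
  fmor_id : forall A : 'I_m -> cOb B, fmor (fun p => cid (A p)) = cid (fob A);
  fmor_comp : forall g f : 'I_m -> cMor B,
    (forall p, if alpha p then ccod (f p) = cdom (g p)
               else ccod (g p) = cdom (f p)) ->
    fmor (fun p => if alpha p then ccomp (g p) (f p) else ccomp (f p) (g p))
    = ccomp (fmor g) (fmor f)
}.

Record mtrans (B C : category) (m1 m2 n : nat) (alpha1 : 'I_m1 -> bool)
    (alpha2 : 'I_m2 -> bool) (F : mfunctor B C alpha1) (G : mfunctor B C alpha2)
    (sigma : 'I_m1 -> 'I_n) (tau : 'I_m2 -> 'I_n) := MTrans {
  tcomp : ('I_n -> cOb B) -> cMor C;
  tcomp_dom : forall A, cdom (tcomp A) = fob F (fun p => A (sigma p));
  tcomp_cod : forall A, ccod (tcomp A) = fob G (fun q => A (tau q))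
}.

Definition dinatural_in (B C : category) (m1 m2 n : nat) (alpha1 : 'I_m1 -> bool)
    (alpha2 : 'I_m2 -> bool) (F : mfunctor B C alpha1) (G : mfunctor B C alpha2)
    (sigma : 'I_m1 -> 'I_n) (tau : 'I_m2 -> 'I_n)
    (phi : ('I_n -> cOb B) -> cMor C) (i : 'I_n) : Prop :=
  forall (A : 'I_n -> cOb B) (f : cMor B),
    let X := cdom f in
    let Y := ccod f in
    ccomp (fmor G (fun q => if tau q == i then (if alpha2 q then f else cid X)
                            else cid (A (tau q))))
      (ccomp (phi (fun j => if j == i then X else A j))
             (fmor F (fun p => if sigma p == i then (if alpha1 p then cid X else f)
                               else cid (A (sigma p)))))
    =
    ccomp (fmor G (fun q => if tau q == i then (if alpha2 q then cid Y else f)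
                            else cid (A (tau q))))
      (ccomp (phi (fun j => if j == i then Y else A j))
             (fmor F (fun p => if sigma p == i then (if alpha1 p then f else cid Y)
                               else cid (A (sigma p))))).

(* Chains of k+1 transformations phi_0, ..., phi_k (indexed by nat;    *)
(* only indices j <= k matter): phi_j : F_j -> F_{j+1} of type         *)
(* 'I_(a j) --sigma j--> 'I_(n j) <--tau j-- 'I_(a j.+1).               *)

(* (l, xi_0..xi_k) is a colimit in finite sets of the zigzag
   n_0 <-tau_0- a_1 -sigma_1-> n_1 <- ... -> n_k, i.e. exactly the set
   computed by the iterated pushouts (pushout pasting). *)
Definition is_colimit (k : nat) (a n : nat -> nat)
    (sigma : forall j, 'I_(a j) -> 'I_(n j))
    (tau : forall j, 'I_(a j.+1) -> 'I_(n j))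
    (l : nat) (xi : forall j, 'I_(n j) -> 'I_l) : Prop :=
  [/\ (forall j, j < k -> forall p : 'I_(a j.+1), xi j (tau j p) = xi j.+1 (sigma j.+1 p)),
      (forall (e : nat) (h : forall j, 'I_(n j) -> 'I_e),
         (forall j, j < k -> forall p : 'I_(a j.+1), h j (tau j p) = h j.+1 (sigma j.+1 p)) ->
         exists u : 'I_l -> 'I_e, forall j, j <= k -> forall x, u (xi j x) = h j x) &
      (forall (e : nat) (u v : 'I_l -> 'I_e),
         (forall j, j <= k -> forall x, u (xi j x) = v (xi j x)) -> u =1 v)].

Definition composite (B C : category) (k : nat) (n : nat -> nat) (l : nat)
    (phi : forall j, ('I_(n j) -> cOb B) -> cMor C)
    (xi : forall j, 'I_(n j) -> 'I_l) (A : 'I_l -> cOb B) : cMor C :=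
  foldl (fun acc j => ccomp (phi j (fun x => A (xi j x))) acc)
        (phi 0 (fun x => A (xi 0 x))) (iota 1 k).

Inductive gnode (a n : nat -> nat) : Type :=
| Place (j : nat) (p : 'I_(a j))
| Trans (j : nat) (t : 'I_(n j)).

Inductive garc (k : nat) (a n : nat -> nat) (alpha : forall j, 'I_(a j) -> bool)
    (sigma : forall j, 'I_(a j) -> 'I_(n j))
    (tau : forall j, 'I_(a j.+1) -> 'I_(n j)) : gnode a n -> gnode a n -> Prop :=
| arc_sigma_in j (p : 'I_(a j)) : j <= k -> alpha j p ->
    garc k alpha sigma tau (@Place a n j p) (@Trans a n j (sigma j p))
| arc_sigma_out j (p : 'I_(a j)) : j <= k -> ~~ alpha j p ->
    garc k alpha sigma tau (@Trans a n j (sigma j p)) (@Place a n j p)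
| arc_tau_in j (p : 'I_(a j.+1)) : j <= k -> ~~ alpha j.+1 p ->
    garc k alpha sigma tau (@Place a n j.+1 p) (@Trans a n j (tau j p))
| arc_tau_out j (p : 'I_(a j.+1)) : j <= k -> alpha j.+1 p ->
    garc k alpha sigma tau (@Trans a n j (tau j p)) (@Place a n j.+1 p).

Definition in_component (k : nat) (a n : nat -> nat)
    (alpha : forall j, 'I_(a j) -> bool)
    (sigma : forall j, 'I_(a j) -> 'I_(n j))
    (tau : forall j, 'I_(a j.+1) -> 'I_(n j))
    (l : nat) (xi : forall j, 'I_(n j) -> 'I_l) (i : 'I_l) (u : gnode a n) : Prop :=
  exists j (t : 'I_(n j)), [/\ j <= k, xi j t = i &
    clos_refl_trans (gnode a n)
      (fun x y => garc k alpha sigma tau x y \/ garc k alpha sigma tau y x)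
      u (@Trans a n j t)].

Definition component_acyclic (k : nat) (a n : nat -> nat)
    (alpha : forall j, 'I_(a j) -> bool)
    (sigma : forall j, 'I_(a j) -> 'I_(n j))
    (tau : forall j, 'I_(a j.+1) -> 'I_(n j))
    (l : nat) (xi : forall j, 'I_(n j) -> 'I_l) (i : 'I_l) : Prop :=
  forall u, in_component k alpha sigma tau xi i u ->
    ~ clos_trans (gnode a n) (garc k alpha sigma tau) u u.

(* Main.v *)
Require Import Defs.
From HB Require Import structures.
From Stdlib Require Import Relations FunctionalExtensionality.
From mathcomp Require Import all_boot.

Set Implicit Arguments.
Unset Strict Implicit.
Unset Printing Implicit Defensive.

Section Chains.
Variable C : category.

Fixpoint chain (x : cMor C) (s : seq (cMor C)) : Prop :=
  match s with [::] => True | y :: s' => ccod x = cdom y /\ chain y s' end.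

Definition ev (x : cMor C) (s : seq (cMor C)) :=
  foldl (fun acc m => ccomp m acc) x s.

Lemma ev_cat x s1 s2 : ev x (s1 ++ s2) = ev (ev x s1) s2.
Proof. exact: foldl_cat. Qed.

Lemma chain_head x x' s : ccod x = ccod x' -> chain x s -> chain x' s.
Proof. by case: s => //= y s E [H1 H2]; split => //; rewrite -E. Qed.

Lemma chain_cat x s1 s2 :
  chain x (s1 ++ s2) <-> chain x s1 /\ chain (last x s1) s2.
Proof.
elim: s1 x => [|y s1 IH] x /=; first by split => // [[]].
split.
- by case=> H1 /IH [H2 H3].
- by case=> [[H1 H2] H3]; split => //; apply/IH.
Qed.

Lemma ev_cod x s : chain x s -> ccod (ev x s) = ccod (last x s).
Proof.
elim: s x => [|y s IH] x //= [H1 H2].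
rewrite /ev /= -/(ev _ _) IH //.
  by case: s {IH H2} => [|z s] //=; rewrite ccod_comp.
by apply: (chain_head _ H2); rewrite ccod_comp.
Qed.

Lemma ev_assoc y t0 t : ccod y = cdom t0 -> chain t0 t ->
  ev y (t0 :: t) = ccomp (ev t0 t) y.
Proof.
elim: t t0 => [|t1 t IH] t0 Hy; first by [].
case=> H1 H2.
have -> : ev y [:: t0, t1 & t] = ev y (ccomp t1 t0 :: t).
  by rewrite /ev /= ccompA.
rewrite IH //.
- by rewrite cdom_comp.
- by apply: (chain_head _ H2); rewrite ccod_comp.
Qed.

Lemma ev_replace x pre t0 t t0' t' post :
  ccod (ev x pre) = cdom t0 -> ccod (ev x pre) = cdom t0' ->
  chain t0 t -> chain t0' t' -> ev t0 t = ev t0' t' ->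
  ev x (pre ++ t0 :: t ++ post) = ev x (pre ++ t0' :: t' ++ post).
Proof.
move=> H1 H2 C1 C2 E.
rewrite !ev_cat -!cat_cons !ev_cat ev_assoc // ev_assoc //.
by rewrite E.
Qed.

Lemma chain_junction x pre y s : chain x (pre ++ y :: s) ->
  ccod (ev x pre) = cdom y /\ chain y s.
Proof.
case/chain_cat => H1 /= [H2 H3]; split => //.
by rewrite ev_cod.
Qed.

End Chains.

Lemma core4 (C : category) (Fh Fg Ph G O Fg' Ph' G' : cMor C) :
  ccod Fh = cdom Fg -> ccod Fh = cdom Fg' -> ccod Fg = cdom Ph -> ccod Fg' = cdom Ph' ->
  ccod Ph = cdom G -> ccod Ph' = cdom G' -> ccod G = cdom O -> ccod G' = cdom O ->
  ccomp G (ccomp Ph Fg) = ccomp G' (ccomp Ph' Fg') ->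
  ccomp (ccomp O G) (ccomp Ph (ccomp Fg Fh)) = ccomp (ccomp O G') (ccomp Ph' (ccomp Fg' Fh)).
Proof.
move=> h1 h1' h2 h2' h3 h3' h4 h4' Hd.
have e1 : ccomp (ccomp O G) (ccomp Ph (ccomp Fg Fh)) = ev Fh [:: Fg; Ph; G; O].
  rewrite /ev /= (@ccompA _ O G (ccomp Ph (ccomp Fg Fh))) //.
  by rewrite ccod_comp // ccod_comp.
have e2 : ccomp (ccomp O G') (ccomp Ph' (ccomp Fg' Fh)) = ev Fh [:: Fg'; Ph'; G'; O].
  rewrite /ev /= (@ccompA _ O G' (ccomp Ph' (ccomp Fg' Fh))) //.
  by rewrite ccod_comp // ccod_comp.
rewrite e1 e2.
apply: (@ev_replace _ Fh [::] Fg [:: Ph; G] Fg' [:: Ph'; G'] [:: O]) => //=.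
Qed.

Unset Implicit Arguments.

Lemma cidcid (D : category) (Z : cOb D) : ccomp (cid Z) (cid Z) = cid Z.
Proof. by have := ccomp_idl (cid Z); rewrite ccod_id. Qed.

Lemma idl' (D : category) (g : cMor D) Z : ccod g = Z -> ccomp (cid Z) g = g.
Proof. by move<-; rewrite ccomp_idl. Qed.

Lemma idr' (D : category) (g : cMor D) Z : cdom g = Z -> ccomp g (cid Z) = g.
Proof. by move<-; rewrite ccomp_idr. Qed.

Lemma fmor_compat (B C : category) m (al : 'I_m -> bool) (G : mfunctor B C al) g h :
  (forall p, if al p then ccod (h p) = cdom (g p) else ccod (g p) = cdom (h p)) ->
  ccod (fmor G h) = cdom (fmor G g).
Proof.
move=> H; rewrite fmor_cod fmor_dom; congr (fob _ _).
apply: functional_extensionality => p; move: (H p); by case: (al p).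
Qed.

Section Main.
Variables (B C : category) (k : nat) (a n : nat -> nat)
  (alpha : forall j, 'I_(a j) -> bool)
  (F : forall j, mfunctor B C (alpha j))
  (sigma : forall j, 'I_(a j) -> 'I_(n j))
  (tau : forall j, 'I_(a j.+1) -> 'I_(n j))
  (phi : forall j, mtrans (F j) (F j.+1) (sigma j) (tau j))
  (l : nat) (xi : forall j, 'I_(n j) -> 'I_l) (i : 'I_l).
Hypothesis Hxi : forall j, j < k -> forall p : 'I_(a j.+1),
  xi j (tau j p) = xi j.+1 (sigma j.+1 p).
Variables (A : 'I_l -> cOb B) (f : cMor B).
Local Notation X := (cdom f).
Local Notation Y := (ccod f).

Definition cfg := forall j, 'I_(n j) -> bool.
Definition ob (v : 'I_l) (b : bool) := if v == i then (if b then Y else X) else A v.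
Definition obj (c : cfg) j (t : 'I_(n j)) := ob (xi j t) (c j t).
Definition var j : 'I_(a j) -> 'I_l :=
  match j return 'I_(a j) -> 'I_l with
  | 0 => fun p => xi 0 (sigma 0 p)
  | j'.+1 => fun p => xi j' (tau j' p) end.
Definition lft (c : cfg) j : 'I_(a j) -> bool :=
  match j return 'I_(a j) -> bool with
  | 0 => fun p => ~~ alpha 0 p
  | j'.+1 => fun p => c j' (tau j' p) end.
Definition rgt (c : cfg) j (p : 'I_(a j)) : bool :=
  if j <= k then c j (sigma j p) else alpha j p.
Definition ent c j (p : 'I_(a j)) : cMor B :=
  if var j p == i then
    (if lft c j p == rgt c j p then cid (if rgt c j p then Y else X) else f)
  else cid (A (var j p)).
Definition E c j := fmor (F j) (ent c j).
Definition P c j := tcomp (phi j) (obj c j).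
Definition valid (c : cfg) := forall j (p : 'I_(a j)), j <= k.+1 -> var j p = i ->
  lft c j p != rgt c j p -> lft c j p = ~~ alpha j p.

Lemma var_sigma j (p : 'I_(a j)) : j <= k -> var j p = xi j (sigma j p).
Proof. by case: j p => [|j] p Hj //=; rewrite Hxi. Qed.

Lemma rgt_le c j p : j <= k -> rgt c j p = c j (sigma j p).
Proof. by rewrite /rgt => ->. Qed.

Lemma pt_l c j p : valid c -> j <= k.+1 ->
  (if alpha j p then cdom (ent c j p) else ccod (ent c j p)) = ob (var j p) (lft c j p).
Proof.
move=> Hc Hj; rewrite /ent /ob.
case Ev: (var j p == i); last by case: (alpha j p); rewrite ?cdom_id ?ccod_id.
move/eqP: Ev => Ev; move: (Hc j p Hj Ev).
by case: (alpha j p); case: (lft c j p); case: (rgt c j p) => //= H;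
  rewrite ?cdom_id ?ccod_id //; case: (H isT).
Qed.

Lemma pt_r c j p : valid c -> j <= k.+1 ->
  (if alpha j p then ccod (ent c j p) else cdom (ent c j p)) = ob (var j p) (rgt c j p).
Proof.
move=> Hc Hj; rewrite /ent /ob.
case Ev: (var j p == i); last by case: (alpha j p); rewrite ?cdom_id ?ccod_id.
move/eqP: Ev => Ev; move: (Hc j p Hj Ev).
by case: (alpha j p); case: (lft c j p); case: (rgt c j p) => //= H;
  rewrite ?cdom_id ?ccod_id //; case: (H isT).
Qed.

Lemma ent_r c j p : valid c -> j <= k ->
  (if alpha j p then ccod (ent c j p) else cdom (ent c j p)) = obj c j (sigma j p).
Proof. by move=> Hc Hj; rewrite pt_r ?(leqW Hj) // var_sigma // rgt_le. Qed.

Lemma ent_l c j q : valid c -> j <= k ->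
  (if alpha j.+1 q then cdom (ent c j.+1 q) else ccod (ent c j.+1 q)) = obj c j (tau j q).
Proof. by move=> Hc Hj; rewrite pt_l. Qed.

Lemma dom_E c j : valid c -> j <= k.+1 ->
  cdom (E c j) = fob (F j) (fun p => ob (var j p) (lft c j p)).
Proof.
move=> Hc Hj; rewrite /E fmor_dom; congr (fob _ _).
by apply: functional_extensionality => p; rewrite pt_l.
Qed.

Lemma cod_E_P c j : valid c -> j <= k -> ccod (E c j) = cdom (P c j).
Proof.
move=> Hc Hj; rewrite /E /P fmor_cod tcomp_dom; congr (fob _ _).
by apply: functional_extensionality => p; rewrite ent_r.
Qed.

Lemma cod_P_E c j : valid c -> j <= k -> ccod (P c j) = cdom (E c j.+1).
Proof.
move=> Hc Hj; rewrite /P tcomp_cod dom_E //.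
Qed.

Definition blk c m := [:: P c m; E c m.+1].
Definition L c := E c 0 :: flatten [seq blk c m | m <- iota 0 k.+1].
Definition D0 := fob (F 0) (fun p => ob (var 0 p) (~~ alpha 0 p)).
Definition M c := ev (cid D0) (L c).

Lemma chain_L c : valid c -> chain (cid D0) (L c).
Proof.
move=> Hc; split; first by rewrite ccod_id dom_E.
suff: forall cnt m0, m0 + cnt <= k.+1 -> chain (E c m0) (flatten [seq blk c m | m <- iota m0 cnt]).
  by apply; rewrite add0n.
elim=> [|cnt IH] m0 H //=.
have Hm : m0 <= k by rewrite -ltnS (leq_trans _ H) // addnS ltnS leq_addr.
split; first exact: cod_E_P.
split; first exact: cod_P_E.
by apply: IH; rewrite addSnnS.
Qed.

Lemma shift c j0 cnt s :
  E c j0 :: flatten [seq blk c m | m <- iota j0 cnt] ++ s =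
  flatten [seq [:: E c m; P c m] | m <- iota j0 cnt] ++ E c (j0 + cnt) :: s.
Proof.
elim: cnt j0 => [|cnt IH] j0 /=; first by rewrite addn0.
by rewrite IH addSnnS.
Qed.

Lemma splitL c j : j <= k ->
  L c = flatten [seq [:: E c m; P c m] | m <- iota 0 j] ++
        E c j :: P c j :: E c j.+1 :: flatten [seq blk c m | m <- iota j.+1 (k - j)].
Proof.
move=> Hj; rewrite /L.
have -> : k.+1 = j + (k - j).+1 by rewrite addnS subnKC.
by rewrite iotaD map_cat flatten_cat shift !add0n.
Qed.


Lemma lftS c j q : lft c j.+1 q = c j (tau j q). Proof. by []. Qed.
Lemma varS j q : var j.+1 q = xi j (tau j q). Proof. by []. Qed.

Section Fire.
Variables (c : cfg) (j : nat) (x : 'I_(n j)).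
Hypotheses (Hc : valid c) (Hj : j <= k) (Hx : xi j x = i) (Hcx : c j x = false).
Hypothesis S1 : forall p : 'I_(a j), sigma j p = x -> ~~ alpha j p -> lft c j p = true.
Hypothesis S2 : forall q : 'I_(a j.+1), tau j q = x -> alpha j.+1 q -> rgt c j.+1 q = true.
Hypothesis Hdin : dinatural_in (F j) (F j.+1) (sigma j) (tau j) (tcomp (phi j)) x.

Definition upd : cfg := fun j' y => if (j' == j) && (val y == val x) then true else c j' y.

Lemma upd_ne j' : j' != j -> upd j' = c j'.
Proof. by move=> H; apply: functional_extensionality => y; rewrite /upd (negbTE H). Qed.
Lemma upd_x : upd j x = true. Proof. by rewrite /upd !eqxx. Qed.
Lemma upd_ne_t y : y != x -> upd j y = c j y.
Proof.
move=> H; rewrite /upd eqxx /=; case: eqP => // /val_inj E.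
by rewrite E eqxx in H.
Qed.

Lemma jj : j != j.+1. Proof. by rewrite ltn_eqF. Qed.
Lemma jj' : j.+1 != j. Proof. by rewrite gtn_eqF. Qed.

Lemma lft_upd j0 : j0 != j.+1 -> lft upd j0 = lft c j0.
Proof.
case: j0 => [|j0] H //=; apply: functional_extensionality => p.
by rewrite upd_ne.
Qed.

Lemma rgt_upd j0 : j0 != j -> rgt upd j0 = rgt c j0.
Proof. by move=> H; apply: functional_extensionality => p; rewrite /rgt upd_ne. Qed.

Lemma xin p : sigma j p = x -> var j p = i.
Proof. by move=> Hs; rewrite var_sigma // Hs. Qed.

Lemma in_plus p : sigma j p = x -> alpha j p -> lft c j p = false.
Proof.
move=> Hs Ha.
have Hr : rgt c j p = false by rewrite rgt_le // Hs.
move: (Hc j p (leqW Hj) (xin p Hs)); rewrite Hr Ha.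
by case: (lft c j p) => // /(_ isT).
Qed.

Lemma out_minus q : tau j q = x -> ~~ alpha j.+1 q -> rgt c j.+1 q = false.
Proof.
move=> Hs Ha.
have Hv : var j.+1 q = i by rewrite varS Hs.
move: (Hc j.+1 q Hj Hv); rewrite lftS Hs Hcx (negbTE Ha).
by case: (rgt c j.+1 q) => // /(_ isT).
Qed.

Definition gF p := if sigma j p == x then (if alpha j p then cid X else f)
  else cid (obj c j (sigma j p)).
Definition gF' p := if sigma j p == x then (if alpha j p then f else cid Y)
  else cid (obj c j (sigma j p)).
Definition hh p := if sigma j p == x then cid (if alpha j p then X else Y) else ent c j p.
Definition gG q := if tau j q == x then (if alpha j.+1 q then f else cid X)
  else cid (obj c j (tau j q)).
Definition gG' q := if tau j q == x then (if alpha j.+1 q then cid Y else f)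
  else cid (obj c j (tau j q)).
Definition oo q := if tau j q == x then cid (if alpha j.+1 q then Y else X) else ent c j.+1 q.
Definition Aph := fun y : 'I_(n j) => if y == x then X else obj c j y.
Definition Aph' := fun y : 'I_(n j) => if y == x then Y else obj c j y.

Lemma Hd : ccomp (fmor (F j.+1) gG) (ccomp (tcomp (phi j) Aph) (fmor (F j) gF)) =
  ccomp (fmor (F j.+1) gG') (ccomp (tcomp (phi j) Aph') (fmor (F j) gF')).
Proof. exact: Hdin. Qed.

Lemma objA : obj c j = Aph.
Proof.
apply: functional_extensionality => y; rewrite /Aph; case: eqP => [->|_] //.
by rewrite /obj /ob Hx eqxx Hcx.
Qed.

Lemma objA' : obj upd j = Aph'.
Proof.
apply: functional_extensionality => y; rewrite /Aph'; case: eqP => [->|/eqP H].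
  by rewrite /obj /ob Hx eqxx upd_x.
by rewrite /obj upd_ne_t.
Qed.

Lemma ent_in p : sigma j p != x -> ent upd j p = ent c j p.
Proof. by move=> H; rewrite /ent lft_upd ?jj // !rgt_le // upd_ne_t. Qed.

Lemma ent_out q : tau j q != x -> ent upd j.+1 q = ent c j.+1 q.
Proof. by move=> H; rewrite /ent rgt_upd ?jj' // !lftS upd_ne_t. Qed.

Lemma pre3 p : if alpha j p then ccod (hh p) = cdom (gF p) else ccod (gF p) = cdom (hh p).
Proof.
rewrite /hh /gF; case: eqP => [Hs|Hs].
  by case: (alpha j p); rewrite ?ccod_id ?cdom_id.
by have := ent_r c j p Hc Hj; case: (alpha j p) => ->; rewrite ?ccod_id ?cdom_id.
Qed.

Lemma pre3' p : if alpha j p then ccod (hh p) = cdom (gF' p) else ccod (gF' p) = cdom (hh p).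
Proof.
rewrite /hh /gF'; case: eqP => [Hs|Hs].
  by case: (alpha j p); rewrite ?ccod_id ?cdom_id.
by have := ent_r c j p Hc Hj; case: (alpha j p) => ->; rewrite ?ccod_id ?cdom_id.
Qed.

Lemma E3 : E c j = ccomp (fmor (F j) gF) (fmor (F j) hh).
Proof.
rewrite /E -fmor_comp; last exact: pre3.
congr (fmor _ _); apply: functional_extensionality => p.
rewrite /gF /hh; case: eqP => [Hs|/eqP Hs].
  rewrite /ent (xin p Hs) eqxx rgt_le // Hs Hcx.
  case Ha: (alpha j p).
    by rewrite (in_plus p Hs Ha) cidcid.
  by rewrite (S1 p Hs (negbT Ha)) /= ccomp_idl.
have := ent_r c j p Hc Hj; case: (alpha j p) => H.
  by rewrite idl'.
by rewrite idr'.
Qed.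

Lemma E3' : E upd j = ccomp (fmor (F j) gF') (fmor (F j) hh).
Proof.
rewrite /E -fmor_comp; last exact: pre3'.
congr (fmor _ _); apply: functional_extensionality => p.
rewrite /gF' /hh; case: eqP => [Hs|/eqP Hs].
  rewrite /ent (xin p Hs) eqxx rgt_le // Hs upd_x lft_upd ?jj //.
  case Ha: (alpha j p).
    by rewrite (in_plus p Hs Ha) ccomp_idr.
  by rewrite (S1 p Hs (negbT Ha)) /= cidcid.
rewrite ent_in //.
have := ent_r c j p Hc Hj; case: (alpha j p) => H.
  by rewrite idl'.
by rewrite idr'.
Qed.

Lemma pre4 q : if alpha j.+1 q then ccod (gG q) = cdom (oo q) else ccod (oo q) = cdom (gG q).
Proof.
rewrite /gG /oo; case: eqP => [Hs|Hs].
  by case: (alpha j.+1 q); rewrite ?ccod_id ?cdom_id.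
by have := ent_l c j q Hc Hj; case: (alpha j.+1 q) => ->; rewrite ?ccod_id ?cdom_id.
Qed.

Lemma pre4' q : if alpha j.+1 q then ccod (gG' q) = cdom (oo q) else ccod (oo q) = cdom (gG' q).
Proof.
rewrite /gG' /oo; case: eqP => [Hs|Hs].
  by case: (alpha j.+1 q); rewrite ?ccod_id ?cdom_id.
by have := ent_l c j q Hc Hj; case: (alpha j.+1 q) => ->; rewrite ?ccod_id ?cdom_id.
Qed.

Lemma E4 : E c j.+1 = ccomp (fmor (F j.+1) oo) (fmor (F j.+1) gG).
Proof.
rewrite /E -fmor_comp; last exact: pre4.
congr (fmor _ _); apply: functional_extensionality => q.
rewrite /gG /oo; case: eqP => [Hs|/eqP Hs].
  rewrite /ent varS lftS Hs Hx eqxx Hcx.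
  case Ha: (alpha j.+1 q).
    by rewrite (S2 q Hs Ha) /= ccomp_idl.
  by rewrite (out_minus q Hs (negbT Ha)) /= cidcid.
have := ent_l c j q Hc Hj; case: (alpha j.+1 q) => H.
  by rewrite idr'.
by rewrite idl'.
Qed.

Lemma E4' : E upd j.+1 = ccomp (fmor (F j.+1) oo) (fmor (F j.+1) gG').
Proof.
rewrite /E -fmor_comp; last exact: pre4'.
congr (fmor _ _); apply: functional_extensionality => q.
rewrite /gG' /oo; case: eqP => [Hs|/eqP Hs].
  rewrite /ent varS lftS Hs Hx eqxx upd_x rgt_upd ?jj' //.
  case Ha: (alpha j.+1 q).
    by rewrite (S2 q Hs Ha) /= cidcid.
  by rewrite (out_minus q Hs (negbT Ha)) /= ccomp_idr.
rewrite ent_out //.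
have := ent_l c j q Hc Hj; case: (alpha j.+1 q) => H.
  by rewrite idr'.
by rewrite idl'.
Qed.

Lemma c2 : ccod (fmor (F j) gF) = cdom (tcomp (phi j) Aph).
Proof.
rewrite fmor_cod tcomp_dom; congr (fob _ _); apply: functional_extensionality => p.
rewrite /gF /Aph; case: eqP => _; last by case: (alpha j p); rewrite ?ccod_id ?cdom_id.
by case: (alpha j p); rewrite ?ccod_id ?cdom_id.
Qed.

Lemma c2' : ccod (fmor (F j) gF') = cdom (tcomp (phi j) Aph').
Proof.
rewrite fmor_cod tcomp_dom; congr (fob _ _); apply: functional_extensionality => p.
rewrite /gF' /Aph'; case: eqP => _; last by case: (alpha j p); rewrite ?ccod_id ?cdom_id.
by case: (alpha j p); rewrite ?ccod_id ?cdom_id.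
Qed.

Lemma c3 : ccod (tcomp (phi j) Aph) = cdom (fmor (F j.+1) gG).
Proof.
rewrite fmor_dom tcomp_cod; congr (fob _ _); apply: functional_extensionality => q.
rewrite /gG /Aph; case: eqP => _; last by case: (alpha j.+1 q); rewrite ?ccod_id ?cdom_id.
by case: (alpha j.+1 q); rewrite ?ccod_id ?cdom_id.
Qed.

Lemma c3' : ccod (tcomp (phi j) Aph') = cdom (fmor (F j.+1) gG').
Proof.
rewrite fmor_dom tcomp_cod; congr (fob _ _); apply: functional_extensionality => q.
rewrite /gG' /Aph'; case: eqP => _; last by case: (alpha j.+1 q); rewrite ?ccod_id ?cdom_id.
by case: (alpha j.+1 q); rewrite ?ccod_id ?cdom_id.
Qed.

Lemma local_eq : ccomp (E c j.+1) (ccomp (P c j) (E c j)) =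
  ccomp (E upd j.+1) (ccomp (P upd j) (E upd j)).
Proof.
rewrite E3 E3' E4 E4' /P objA objA'.
apply: core4.
- apply: fmor_compat; exact: pre3.
- apply: fmor_compat; exact: pre3'.
- exact: c2.
- exact: c2'.
- exact: c3.
- exact: c3'.
- apply: fmor_compat; exact: pre4.
- apply: fmor_compat; exact: pre4'.
- exact: Hd.
Qed.

Lemma valid_upd : valid upd.
Proof.
move=> j0 p Hj0 Hv Hne.
case: (eqVneq j0 j) => [Ej|Nj].
  subst j0.
  case: (eqVneq (sigma j p) x) => [Hs|Hs].
    move: Hne; rewrite lft_upd ?jj // rgt_le // Hs upd_x.
    case Ha: (alpha j p).
      by rewrite (in_plus p Hs Ha).
    by rewrite (S1 p Hs (negbT Ha)).
  move: Hne; rewrite lft_upd ?jj // rgt_le // upd_ne_t // -rgt_le // => Hne.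
  exact: Hc.
case: (eqVneq j0 j.+1) => [Ej'|Nj'].
  subst j0.
  case: (eqVneq (tau j p) x) => [Hs|Hs].
    move: Hne; rewrite lftS Hs upd_x rgt_upd ?jj' //.
    case Ha: (alpha j.+1 p).
      by rewrite (S2 p Hs Ha).
    by [].
  move: Hne; rewrite lftS upd_ne_t // -lftS rgt_upd ?jj' // => Hne.
  exact: Hc.
move: Hne; rewrite lft_upd // rgt_upd // => Hne.
exact: Hc.
Qed.

Lemma E_upd m : m != j -> m != j.+1 -> E upd m = E c m.
Proof.
move=> H1 H2; rewrite /E; congr (fmor _ _); apply: functional_extensionality => p.
by rewrite /ent lft_upd // rgt_upd.
Qed.

Lemma P_upd m : m != j -> P upd m = P c m.
Proof. by move=> H; rewrite /P /obj upd_ne. Qed.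

Lemma fire_eq : M c = M upd.
Proof.
have Hcu := valid_upd.
rewrite /M.
have HL := chain_L c Hc; have HL' := chain_L upd Hcu.
rewrite (splitL c j Hj) in HL *; rewrite (splitL upd j Hj) in HL' *.
have Hpre : [seq [:: E upd m; P upd m] | m <- iota 0 j] = [seq [:: E c m; P c m] | m <- iota 0 j].
  apply/eq_in_map => m; rewrite mem_iota add0n => /andP [_ Hm].
  by rewrite E_upd ?P_upd // ltn_eqF // ltnW.
have Hpost : [seq blk upd m | m <- iota j.+1 (k - j)] = [seq blk c m | m <- iota j.+1 (k - j)].
  apply/eq_in_map => m; rewrite mem_iota => /andP [Hm _].
  rewrite /blk E_upd ?P_upd //; first by rewrite gtn_eqF // ltnW.
    by rewrite gtn_eqF // ltnW.
  by rewrite eqSS gtn_eqF.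
rewrite Hpre Hpost in HL' *.
case/chain_junction: HL => J1 [J2 [J3 _]].
case/chain_junction: HL' => J1' [J2' [J3' _]].
apply: (@ev_replace _ (cid (D0)) _ (E c j) [:: P c j; E c j.+1] (E upd j) [:: P upd j; E upd j.+1]) => //.
exact: local_eq.
Qed.

End Fire.

Lemma t_rt (T0 : Type) (R : relation T0) x y z :
  clos_trans T0 R x y -> clos_refl_trans T0 R y z -> clos_trans T0 R x z.
Proof.
move=> H1 H2; elim: H2 x H1 => [y' z' H | y' | y' z' w' _ IH1 _ IH2] x0 H1.
- exact: t_trans H1 (t_step _ _ _ _ H).
- done.
- exact: IH2 (IH1 _ H1).
Qed.

Section Select.
Hypothesis Hacyc : component_acyclic k alpha sigma tau xi i.

Definition TT := {j : 'I_k.+1 & 'I_(n j)}.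

Definition edgeb (ju : nat) (tu : 'I_(n ju)) (jv : nat) (tv : 'I_(n jv)) : bool :=
  ((ju == jv.+1) && [exists p : 'I_(a jv.+1),
      [&& val (sigma jv.+1 p) == val tu, ~~ alpha jv.+1 p & tau jv p == tv]])
  || ((jv == ju.+1) && [exists q : 'I_(a ju.+1),
      [&& tau ju q == tu, alpha ju.+1 q & val (sigma ju.+1 q) == val tv]]).

Definition edge : rel TT := fun u v => edgeb (tag u) (tagged u) (tag v) (tagged v).
Definition nd (u : TT) : gnode a n := @Trans a n (tag u) (tagged u).
Local Notation R := (garc k alpha sigma tau).

Lemma edge_arc ju tu jv tv : ju <= k -> jv <= k -> edgeb ju tu jv tv ->
  clos_trans _ R (@Trans a n ju tu) (@Trans a n jv tv).
Proof.
move=> Hu Hv; case/orP.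
  case/andP => /eqP E /existsP [p /and3P [Hs Ha /eqP Ht]]; subst ju.
  have -> : tu = sigma jv.+1 p by apply: val_inj; rewrite (eqP Hs).
  apply: t_trans (t_step _ _ _ _ (arc_sigma_out sigma tau Hu Ha)) _.
  by rewrite -Ht; apply: t_step; apply: arc_tau_in => //; exact: ltnW.
case/andP => /eqP E /existsP [q /and3P [/eqP Ht Ha Hs]]; subst jv.
have -> : tv = sigma ju.+1 q by apply: val_inj; rewrite (eqP Hs).
rewrite -Ht.
apply: t_trans (t_step _ _ _ _ (arc_tau_out sigma tau Hu Ha)) _.
by apply: t_step; apply: arc_sigma_in.
Qed.

Lemma tagk (u : TT) : tag u <= k.
Proof. by have := ltn_ord (tag u). Qed.

Lemma conn_rt (u v : TT) : connect edge u v -> clos_refl_trans _ R (nd u) (nd v).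
Proof.
move/connectP => [s Hp ->]; elim: s u Hp => [|w s IH] u /=; first by constructor 2.
case/andP => He Hp; apply: rt_trans (IH _ Hp).
apply: clos_t_clos_rt; exact: (edge_arc _ _ _ _ (tagk u) (tagk w) He).
Qed.

Lemma no_cycle (u w : TT) : xi (tag u) (tagged u) = i -> edge u w -> connect edge w u -> False.
Proof.
move=> Hxu Huw Hwu; apply: (Hacyc (nd u)).
  by exists (tag u), (tagged u); split => //; [exact: tagk | constructor 2].
exact: (t_rt _ _ _ _ _ (edge_arc _ _ _ _ (tagk u) (tagk w) Huw) (conn_rt w u Hwu)).
Qed.

Definition sel (c : cfg) (u : TT) := (xi (tag u) (tagged u) == i) && ~~ c (tag u) (tagged u).

Lemma select c u0 : sel c u0 -> exists u, sel c u /\ forall v, sel c v -> ~~ edge u v.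
Proof.
move=> Hu0.
pose reach (u : TT) := [set v | [exists w, edge u w && connect edge w v]].
case: (arg_minnP (fun u => #|reach u|) Hu0) => u Hu Hmin.
exists u; split => // v Hv; apply/negP => Huv.
have Hsub : reach v \subset reach u.
  apply/subsetP => z; rewrite !inE => /existsP [w /andP [Hvw Hwz]].
  apply/existsP; exists v; rewrite Huv /=.
  exact: connect_trans (connect1 Hvw) Hwz.
have Hvu : v \in reach u by rewrite inE; apply/existsP; exists v; rewrite Huv connect0.
have Hvv : v \notin reach v.
  apply/negP; rewrite inE => /existsP [w /andP [Hvw Hwv]].
  by apply: (no_cycle v w _ Hvw Hwv); case/andP: Hv => /eqP.
have : reach v \proper reach u by apply/properP; split => //; exists v.
by move/proper_card; rewrite ltnNge Hmin.
Qed.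

Lemma S1_of c j (x : 'I_(n j)) : j <= k -> xi j x = i ->
  (forall v : TT, sel c v -> ~~ edgeb j x (tag v) (tagged v)) ->
  forall p : 'I_(a j), sigma j p = x -> ~~ alpha j p -> lft c j p = true.
Proof.
case: j x => [|j] x Hj Hx Hno p Hs Ha; first exact: Ha.
rewrite lftS; case Hc: (c j (tau j p)) => //; exfalso.
have Hjk : j < k.+1 by rewrite ltnS ltnW.
pose v : TT := existT _ (Ordinal Hjk) (tau j p).
apply: (negP (Hno v _)).
  by rewrite /sel /= Hc Hxi // Hs Hx eqxx.
rewrite /edgeb /=; apply/orP; left; rewrite eqxx /=.
by apply/existsP; exists p; rewrite Hs eqxx Ha eqxx.
Qed.

Lemma S2_of c j (x : 'I_(n j)) : j <= k -> xi j x = i ->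
  (forall v : TT, sel c v -> ~~ edgeb j x (tag v) (tagged v)) ->
  forall q : 'I_(a j.+1), tau j q = x -> alpha j.+1 q -> rgt c j.+1 q = true.
Proof.
move=> Hj Hx Hno q Hs Ha; rewrite /rgt; case: ifP => Hle //.
case Hc: (c j.+1 (sigma j.+1 q)) => //; exfalso.
pose v : TT := existT _ (Ordinal (Hle : j.+1 < k.+1)) (sigma j.+1 q).
apply: (negP (Hno v _)).
  by rewrite /sel /= Hc -Hxi // Hs Hx eqxx.
rewrite /edgeb /=; apply/orP; right; rewrite eqxx /=.
by apply/existsP; exists q; rewrite Hs eqxx Ha eqxx.
Qed.

End Select.

Definition ctrue : cfg := fun j (_ : 'I_(n j)) => true.

Lemma all_true c : (forall u : TT, ~~ sel c u) -> M c = M ctrue.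
Proof.
move=> H0.
have Hall : forall j t, j <= k -> xi j t = i -> c j t = true.
  move=> j t Hj Ht; have Hjk : j < k.+1 by rewrite ltnS.
  move: (H0 (existT _ (Ordinal Hjk) t)); rewrite /sel /= Ht eqxx /=.
  by move/negPn.
have Hobj : forall m, m <= k -> obj c m = obj ctrue m.
  move=> m Hm; apply: functional_extensionality => t; rewrite /obj /ob.
  by case: eqP => // Ht; rewrite Hall.
have Hl : forall m p, m <= k.+1 -> var m p = i -> lft c m p = lft ctrue m p.
  case=> [|m] p Hm Hv //=; by rewrite Hall.
have Hr : forall m p, m <= k.+1 -> var m p = i -> rgt c m p = rgt ctrue m p.
  move=> m p Hm Hv; rewrite /rgt; case: ifP => // Hmk.
  by rewrite Hall // -var_sigma.
have Hent : forall m, m <= k.+1 -> ent c m = ent ctrue m.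
  move=> m Hm; apply: functional_extensionality => p; rewrite /ent.
  by case: eqP => // Hv; rewrite Hl ?Hr.
rewrite /M /L /E Hent //; congr (ev _ (_ :: flatten _)).
apply/eq_in_map => m; rewrite mem_iota add0n => /andP [_ Hm].
by rewrite /blk /E /P Hobj ?Hent.
Qed.

Definition cb (b : bool) : cfg := fun j (_ : 'I_(n j)) => b.

Lemma valid_cb b : valid (cb b).
Proof.
move=> j p Hj Hv; case: j p Hj Hv => [|j] p Hj Hv //=.
rewrite /rgt; case: ifP => _; first by rewrite eqxx.
by case: b; case: (alpha j.+1 p).
Qed.

Lemma ev_cons (x y : cMor C) s : ev x (y :: s) = ev (ccomp y x) s.
Proof. by []. Qed.

Lemma E_mid b m : m < k -> E (cb b) m.+1 = cid (ccod (P (cb b) m)).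
Proof.
move=> Hm; rewrite /P tcomp_cod -fmor_id /E; congr (fmor _ _).
apply: functional_extensionality => q.
by rewrite /ent /rgt Hm eqxx /obj /ob /=; case: ifP.
Qed.

Lemma P_chain b m : m < k -> ccod (P (cb b) m) = cdom (P (cb b) m.+1).
Proof.
move=> Hm; rewrite /P tcomp_cod tcomp_dom; congr (fob _ _).
by apply: functional_extensionality => q; rewrite /obj Hxi.
Qed.

Lemma chainP b cnt : forall m0, m0 + cnt <= k ->
  chain (P (cb b) m0) [seq P (cb b) m | m <- iota m0.+1 cnt].
Proof.
elim: cnt => [|cnt IH] m0 H //=; split.
  by apply: P_chain; rewrite (leq_trans _ H) // addnS ltnS leq_addr.
by apply: IH; rewrite addSnnS.
Qed.

Lemma remove_ids b cnt : forall m0 x, m0 + cnt <= k -> ccod x = cdom (P (cb b) m0) ->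
  ev x (flatten [seq blk (cb b) m | m <- iota m0 cnt.+1]) =
  ccomp (E (cb b) (m0 + cnt).+1) (ev x [seq P (cb b) m | m <- iota m0 cnt.+1]).
Proof.
elim: cnt => [|cnt IH] m0 x Hm Hx; first by rewrite addn0.
have Hm0 : m0 < k by rewrite (leq_trans _ Hm) // addnS ltnS leq_addr.
change (ev (ccomp (E (cb b) m0.+1) (ccomp (P (cb b) m0) x))
   (flatten [seq blk (cb b) m | m <- iota m0.+1 cnt.+1]) =
   ccomp (E (cb b) (m0 + cnt.+1).+1)
   (ev (ccomp (P (cb b) m0) x) [seq P (cb b) m | m <- iota m0.+1 cnt.+1])).
rewrite (E_mid b m0) // -(ccod_comp Hx) ccomp_idl.
rewrite IH -?addSnnS //; first by rewrite addSnnS.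
by rewrite ccod_comp // P_chain.
Qed.

Lemma foldl_map' (T1 T2 R0 : Type) (g : R0 -> T2 -> R0) (h : T1 -> T2) z s :
  foldl g z (map h s) = foldl (fun acc x => g acc (h x)) z s.
Proof. by elim: s z => //= y s IH z; rewrite IH. Qed.

Lemma M_const b : M (cb b) = ccomp (E (cb b) k.+1)
  (ccomp (composite k (fun j => tcomp (phi j)) xi (fun v => ob v b)) (E (cb b) 0)).
Proof.
have Hv := valid_cb b.
rewrite /M /L ev_cons idr'; last by rewrite dom_E.
rewrite (remove_ids b k 0 (E (cb b) 0)) //; last by rewrite cod_E_P.
rewrite add0n.
change (ccomp (E (cb b) k.+1) (ev (E (cb b) 0) (P (cb b) 0 :: [seq P (cb b) m | m <- iota 1 k])) =
  ccomp (E (cb b) k.+1)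
  (ccomp (composite k (fun j => tcomp (phi j)) xi (fun v => ob v b)) (E (cb b) 0))).
rewrite ev_assoc; first last.
- by apply: chainP; rewrite add0n.
- by rewrite cod_E_P.
congr (ccomp _ (ccomp _ _)).
by rewrite /ev foldl_map'.
Qed.

Section Final.
Hypothesis Hacyc : component_acyclic k alpha sigma tau xi i.
Hypothesis Hdin_all : forall j, j <= k -> forall x : 'I_(n j), xi j x = i ->
  dinatural_in (F j) (F j.+1) (sigma j) (tau j) (tcomp (phi j)) x.

Lemma main_ind N : forall c, valid c -> #|[set u | sel c u]| <= N -> M c = M ctrue.
Proof.
elim: N => [|N IH] c Hc HN.
  apply: all_true => u; apply/negP => Hu.
  move: HN; rewrite leqn0 cards_eq0 => /eqP E.
  have Hin : u \in [set u | sel c u] by rewrite inE.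
  by rewrite E inE in Hin.
case: (pickP [pred u | sel c u]) => [u0 Hu0 | Hno]; last first.
  by apply: all_true => u; move: (Hno u) => /= ->.
case: (select Hacyc c u0 Hu0) => u [Hu Hnou].
have Hj := tagk u.
have Hu' := Hu; case/andP: Hu' => /eqP Hx Hcx.
have Hno' : forall v : TT, sel c v -> ~~ edgeb (tag u) (tagged u) (tag v) (tagged v).
  exact: Hnou.
have S1 := S1_of c (tag u) (tagged u) Hj Hx Hno'.
have S2 := S2_of c (tag u) (tagged u) Hj Hx Hno'.
rewrite (fire_eq _ _ _ Hc Hj Hx (negbTE Hcx) S1 S2 (Hdin_all _ Hj _ Hx)).
apply: IH; first exact: (valid_upd _ _ _ Hc Hj Hx (negbTE Hcx) S1 S2).
rewrite -ltnS; apply: leq_trans HN; apply: proper_card; apply/properP; split.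
  apply/subsetP => v; rewrite !inE /sel /upd; case/andP => ->.
  by case: ifP.
exists u; first by rewrite inE.
by rewrite inE /sel upd_x andbF.
Qed.

Lemma final_eq :
  ccomp (fmor (F k.+1) (fun q => if xi k (tau k q) == i
        then (if alpha k.+1 q then f else cid X) else cid (A (xi k (tau k q)))))
    (ccomp (composite k (fun j => tcomp (phi j)) xi (fun j => if j == i then X else A j))
       (fmor (F 0) (fun p => if xi 0 (sigma 0 p) == i
           then (if alpha 0 p then cid X else f) else cid (A (xi 0 (sigma 0 p)))))) =
  ccomp (fmor (F k.+1) (fun q => if xi k (tau k q) == i
        then (if alpha k.+1 q then cid Y else f) else cid (A (xi k (tau k q)))))
    (ccomp (composite k (fun j => tcomp (phi j)) xi (fun j => if j == i then Y else A j))
       (fmor (F 0) (fun p => if xi 0 (sigma 0 p) == i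
           then (if alpha 0 p then f else cid Y) else cid (A (xi 0 (sigma 0 p)))))).
Proof.
have EL0 : fmor (F 0) (fun p => if xi 0 (sigma 0 p) == i
           then (if alpha 0 p then cid X else f) else cid (A (xi 0 (sigma 0 p)))) = E (cb false) 0.
  rewrite /E; congr (fmor _ _); apply: functional_extensionality => p.
  by rewrite /ent /rgt leq0n /=; case: eqP => //; case: (alpha 0 p).
have ER0 : fmor (F 0) (fun p => if xi 0 (sigma 0 p) == i
           then (if alpha 0 p then f else cid Y) else cid (A (xi 0 (sigma 0 p)))) = E (cb true) 0.
  rewrite /E; congr (fmor _ _); apply: functional_extensionality => p.
  by rewrite /ent /rgt leq0n /=; case: eqP => //; case: (alpha 0 p).
have EL1 : fmor (F k.+1) (fun q => if xi k (tau k q) == i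
        then (if alpha k.+1 q then f else cid X) else cid (A (xi k (tau k q)))) = E (cb false) k.+1.
  rewrite /E; congr (fmor _ _); apply: functional_extensionality => q.
  by rewrite /ent /rgt ltnn /=; case: eqP => //; case: (alpha k.+1 q).
have ER1 : fmor (F k.+1) (fun q => if xi k (tau k q) == i
        then (if alpha k.+1 q then cid Y else f) else cid (A (xi k (tau k q)))) = E (cb true) k.+1.
  rewrite /E; congr (fmor _ _); apply: functional_extensionality => q.
  by rewrite /ent /rgt ltnn /=; case: eqP => //; case: (alpha k.+1 q).
rewrite EL0 ER0 EL1 ER1.
transitivity (M (cb false)); first exact: esym (M_const false).
transitivity (M (cb true)); last exact: M_const true.
exact: (main_ind _ (cb false) (valid_cb false) (leqnn _)).
Qed.

End Final.

End Main.

Theorem mainTheorem5 (B C : category) (k : nat) (a n : nat -> nat)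
    (alpha : forall j, 'I_(a j) -> bool)
    (F : forall j, mfunctor B C (alpha j))
    (sigma : forall j, 'I_(a j) -> 'I_(n j))
    (tau : forall j, 'I_(a j.+1) -> 'I_(n j))
    (phi : forall j, mtrans (F j) (F j.+1) (sigma j) (tau j))
    (l : nat) (xi : forall j, 'I_(n j) -> 'I_l) (i : 'I_l) :
  is_colimit k sigma tau xi ->
  component_acyclic k alpha sigma tau xi i ->
  (forall j, j <= k -> forall x : 'I_(n j), xi j x = i ->
     dinatural_in (F j) (F j.+1) (sigma j) (tau j) (tcomp (phi j)) x) ->
  dinatural_in (F 0) (F k.+1) (fun p => xi 0 (sigma 0 p)) (fun q => xi k (tau k q))
    (composite k (fun j => tcomp (phi j)) xi) i.
Proof.
move=> [Hxi _ _] Hac Hdin A f /=.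
exact: (@final_eq B C k a n alpha F sigma tau phi l xi i Hxi A f Hac Hdin).
Qed.
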